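(* Let $\alpha$ be a QCA on $\mathrm{Mat}(\mathbb{Z}^D,p)$ with spread $\ell>1$ (more generally, any $\ell>1$ that bounds its spread), and $n\in\mathbb{Z}$. Then the boundary algebra $\mathcal B(n,\ell)=\alpha(\mathrm{Mat}(H(n),p))\cap\mathrm{Mat}(S(n,\ell),p)$, regarded as a subalgebra of a local operator algebra on $\mathbb{Z}^{D-1}$, is an invertible subalgebra. If the QCA has spread at most $\ell$, then this invertible subalgebra has spread at most $2\ell$.
   Context: For $p:\mathbb{Z}^D\to\mathbb{Z}_{>0}$ and finite $F$, $\mathrm{Mat}(F,p)=\bigotimes_{s\in F}M_{p(s)}(\mathbb{C})$ with embeddings by tensoring identities; $\mathrm{Mat}(\mathbb{Z}^D,p)$ is the union, and for arbitrary $S$, $\mathrm{Mat}(S,p)$ is the union of $\mathrm{Mat}(F,p)$ over finite $F\subseteq S$. $\mathrm{Supp}(x)$ is the smallest finite set $F$ with $x\in\mathrm{Mat}(F,p)$; $S^{+\ell}$ is the set of sites at $\ell_\infty$-distance at most $\ell$ from $S$. A QCA is a $*$-automorphism $\alpha$ of $\mathrm{Mat}(\mathbb{Z}^D,p)$ with some $\ell>0$ (spread) such that $\mathrm{Supp}(\alpha(x))\subseteq\mathrm{Supp}(x)^{+\ell}$ for all $x$. Put $H(n)=(\mathbb{Z}\cap(-\infty,n])\times\mathbb{Z}^{D-1}$ and $S(n,\ell)=(\mathbb{Z}\cap[n-\ell+1,n+\ell])\times\mathbb{Z}^{D-1}$. The algebra $\mathrm{Mat}(S(n,\ell),p)$ is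 identified with the local operator algebra $\mathrm{Mat}(\mathbb{Z}^{D-1},p')$ where the site $y\in\mathbb{Z}^{D-1}$ combines the sites $\{n-\ell+1,\dots,n+\ell\}\times\{y\}$, i.e. $p'(y)=\prod_{j=n-\ell+1}^{n+\ell}p(j,y)$. A unital $*$-subalgebra $\mathcal A$ of $\mathrm{Mat}(\mathbb{Z}^{D-1},p')$ is invertible with spread $m$ if every $x\in\mathrm{Mat}(\mathbb{Z}^{D-1},p')$ is a finite sum $x=\sum_ia_ib_i$ with $a_i\in\mathcal A$, $b_i$ in the commutant of $\mathcal A$ within $\mathrm{Mat}(\mathbb{Z}^{D-1},p')$, and $\mathrm{Supp}(a_i),\mathrm{Supp}(b_i)\subseteq\mathrm{Supp}(x)^{+m}$. *)

(* Defs.v *)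
From HB Require Import structures.
From mathcomp Require Import all_boot all_order all_algebra.
From mathcomp Require Import boolp classical_sets cardinality fsbigop.
From mathcomp Require Import complex Rstruct.

Set Implicit Arguments.
Unset Strict Implicit.
Unset Printing Implicit Defensive.

Import Order.TTheory GRing.Theory Num.Theory.
Local Open Scope classical_set_scope.
Local Open Scope ring_scope.

Definition C : Type := complex Rdefinitions.R.

Definition site (D : nat) : Type := {ffun 'I_D -> int}.

Definition linf_dist (D : nat) (s t : site D) : nat :=
  (\max_(i : 'I_D) `|s i - t i|)%N.

Definition thicken (D : nat) (S : set (site D)) (l : nat) : set (site D) :=
  [set t | exists2 s, S s & (linf_dist s t <= l)%N].

(** Concrete model of the local operator algebra Mat(Z^D,p).
    A (product-basis) configuration assigns to every site s a basis index of
    C^{p(s)}.  An operator is represented by its matrix kernel on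
    configurations.  An element A of Mat(G,p) = (x)_{s in G} M_{p(s)}(C),
    G finite, embedded into larger algebras by tensoring with identities, is
    represented by the kernel of A (x) 1 :
       K sigma tau = A(sigma|_G, tau|_G) * [sigma = tau off G]
    on valid configurations and 0 elsewhere. *)
Definition conf (D : nat) : Type := site D -> nat.
Definition op (D : nat) : Type := conf D -> conf D -> C.

Section LocalAlgebra.
Variable D : nat.
Variable p : site D -> nat.

Definition valid (sg : conf D) : Prop := forall s, (sg s < p s)%N.

Definition agree_off (G : set (site D)) (sg tau : conf D) : Prop :=
  forall s, ~ G s -> sg s = tau s.

Definition agree_on (G : set (site D)) (sg tau : conf D) : Prop :=
  forall s, G s -> sg s = tau s.

(** K is of the form A (x) 1 with A acting on the sites of G. *)
Definition ampliation (G : set (site D)) (K : op D) : Prop :=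
  (forall sg tau, K sg tau != 0 ->
     [/\ valid sg, valid tau & agree_off G sg tau]) /\
  (forall sg tau sg' tau', valid sg -> valid tau -> valid sg' -> valid tau' ->
     agree_off G sg tau -> agree_off G sg' tau' ->
     agree_on G sg sg' -> agree_on G tau tau' -> K sg tau = K sg' tau').

Definition Mat (S : set (site D)) : set (op D) :=
  [set K | exists G, [/\ finite_set G, G `<=` S & ampliation G K]].

Definition opzero : op D := fun _ _ => 0.
Definition opone : op D :=
  fun sg tau => if `[< sg = tau /\ valid sg >] then 1 else 0.
Definition opadd (x y : op D) : op D := fun sg tau => x sg tau + y sg tau.
Definition opscale (c : C) (x : op D) : op D := fun sg tau => c * x sg tau.
(* matrix product; for local operators only finitely many terms are nonzero *)
Definition opmul (x y : op D) : op D :=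
  fun sg tau => \sum_(rho \in [set: conf D]) x sg rho * y rho tau.
Definition opadj (x : op D) : op D := fun sg tau => (x tau sg)^*.

Definition is_Supp (x : op D) (F : set (site D)) : Prop :=
  [/\ finite_set F, Mat F x &
      forall G, finite_set G -> Mat G x -> F `<=` G].

Definition star_automorphism (alpha : op D -> op D) : Prop :=
  [/\ forall x, Mat setT x -> Mat setT (alpha x),
      forall x y, Mat setT x -> Mat setT y ->
        alpha (opadd x y) = opadd (alpha x) (alpha y),
      forall c x, Mat setT x -> alpha (opscale c x) = opscale c (alpha x),
      forall x y, Mat setT x -> Mat setT y ->
        alpha (opmul x y) = opmul (alpha x) (alpha y) &
      forall x, Mat setT x -> alpha (opadj x) = opadj (alpha x)] /\
  (forall x y, Mat setT x -> Mat setT y -> alpha x = alpha y -> x = y) /\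
  (forall y, Mat setT y -> exists2 x, Mat setT x & alpha x = y).

Definition QCA_spread (alpha : op D -> op D) (l : nat) : Prop :=
  star_automorphism alpha /\
  forall x F G, is_Supp x F -> is_Supp (alpha x) G -> G `<=` thicken F l.

Definition unital_star_subalg (Amb A : set (op D)) : Prop :=
  [/\ A `<=` Amb, A opone,
      forall x y, A x -> A y -> A (opadd x y),
      forall c x, A x -> A (opscale c x) &
      forall x y, A x -> A y -> A (opmul x y)] /\
  (forall x, A x -> A (opadj x)).

Definition commutant_in (Amb A : set (op D)) : set (op D) :=
  [set b | Amb b /\ forall a, A a -> opmul a b = opmul b a].

End LocalAlgebra.

(** Geometry for D = d+1: the first coordinate is the index ord0. *)
Section Boundary.
Variable d : nat.
Variable p : site d.+1 -> nat.

Definition Hhalf (n : int) : set (site d.+1) := [set s : site d.+1 | s ord0 <= n].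

Definition Sstrip (n : int) (l : nat) : set (site d.+1) :=
  [set s : site d.+1 | n - l%:Z + 1 <= s ord0 <= n + l%:Z].

Definition proj (s : site d.+1) : site d := [ffun i => s (lift ord0 i)].

(** Identification of Mat(S(n,l),p) with Mat(Z^{D-1},p'): the coarse site
    y in Z^{D-1} is the block {n-l+1,...,n+l} x {y}; so Mat(Y,p') for
    Y a subset of Z^{D-1} is Mat(S(n,l) ∩ ({n-l+1..n+l} x Y), p). *)
Definition coarseMat (n : int) (l : nat) (Y : set (site d)) : set (op d.+1) :=
  Mat p [set s | Sstrip n l s /\ Y (proj s)].

Definition is_coarseSupp (n : int) (l : nat) (x : op d.+1) (Y : set (site d))
  : Prop :=
  [/\ finite_set Y, coarseMat n l Y x &
      forall Y', finite_set Y' -> coarseMat n l Y' x -> Y `<=` Y'].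

Definition invertible_subalg (n : int) (l : nat) (A : set (op d.+1)) (m : nat)
  : Prop :=
  let Amb := coarseMat n l setT in
  unital_star_subalg p Amb A /\
  forall x, Amb x ->
    exists (k : nat) (a b : 'I_k -> op d.+1),
      x = \big[@opadd _/@opzero _]_(i < k) opmul (a i) (b i) /\
      forall i, [/\ A (a i), commutant_in Amb A (b i) &
        forall Yx Ya Yb, is_coarseSupp n l x Yx ->
          is_coarseSupp n l (a i) Ya -> is_coarseSupp n l (b i) Yb ->
          Ya `<=` thicken Yx m /\ Yb `<=` thicken Yx m].

Definition boundary_alg (alpha : op d.+1 -> op d.+1) (n : int) (l : nat)
  : set (op d.+1) :=
  [set x | (exists2 y, Mat p (Hhalf n) y & x = alpha y) /\
           Mat p (Sstrip n l) x].

End Boundary.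

(* Main.v *)
Require Import Defs.
From HB Require Import structures.
From mathcomp Require Import all_boot all_order all_algebra.
From mathcomp Require Import boolp classical_sets cardinality fsbigop.
From mathcomp Require Import complex Rstruct.
From mathcomp Require Import zify.
Set Implicit Arguments.
Unset Strict Implicit.
Unset Printing Implicit Defensive.
Import Order.TTheory GRing.Theory Num.Theory.
Local Open Scope classical_set_scope.
Local Open Scope ring_scope.
Section Ops.
Variable D : nat.
Variable p : site D -> nat.

Local Notation site := (site D).
Local Notation conf := (conf D).
Local Notation op := (op D).
Local Notation valid := (valid p).
Local Notation ampl := (ampliation p).

Lemma fin_seqP (G : set site) : finite_set G -> exists s : seq site, G = [set x | x \in s].
Proof.
move/finite_fsetP=> [X ->]; exists (finmap.enum_fset X).
by apply/seteqP; split=> x /=.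
Qed.

Definition setc (sg : conf) (s : site) (c : nat) : conf :=
  fun t => if t == s then c else sg t.

Definition Wc (G : set site) (sg : conf) : set conf :=
  [set rho | (forall s, G s -> (rho s < p s)%N) /\ agree_off G sg rho].

Lemma Wc_fin G sg : finite_set G -> finite_set (Wc G sg).
Proof.
move/fin_seqP=> [s ->]; elim: s => [|a s IH].
  apply: (sub_finite_set _ (finite_set1 sg)) => rho [_ ag] /=.
  by apply/funext => t; rewrite ag.
have [ain|anin] := boolP (a \in s).
  apply: sub_finite_set IH => rho [h1 h2]; split.
    by move=> t /= ts; apply: h1; rewrite /= in_cons ts orbT.
  move=> t /= ts; apply: h2 => /=; rewrite in_cons => /orP[/eqP ta|//].
  by apply: ts; rewrite ta.
have fin2 := finite_setX IH (finite_II (p a)).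
apply: sub_finite_set (finite_image (fun pr : conf * nat => setc pr.1 a pr.2) fin2).
move=> rho [h1 h2]; exists (setc rho a (sg a), rho a).
  split=> /=.
    split.
      move=> t /= ts; rewrite /setc; case: eqP => [ta|_]; first by move: ts; rewrite ta => ts; rewrite ts in anin.
      by apply: h1; rewrite /= in_cons ts orbT.
    move=> t /= ts; rewrite /setc; case: eqP => [->//|ta].
    apply: h2 => /=; rewrite in_cons => /orP[/eqP //|]; exact: ts.
  by apply: h1; rewrite /= in_cons eqxx.
by apply/funext => t; rewrite /setc /=; case: eqP => [->|].
Qed.

Definition cfgs (G : set site) (sg : conf) : set conf :=
  [set rho | valid rho /\ agree_off G sg rho].

Lemma cfgs_fin G sg : finite_set G -> finite_set (cfgs G sg).
Proof.
move=> fG; apply: sub_finite_set (Wc_fin sg fG) => rho [v a]; split=> // s _; exact: v.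
Qed.

Lemma fsum1 (f : conf -> C) r0 : (forall r, f r != 0 -> r = r0) ->
  \sum_(r \in [set: conf]) f r = f r0.
Proof.
move=> h; rewrite -(fsbig_widen [set r0]) ?fsbig_set1 // => r [_ /= rr0].
by apply/eqP; move: rr0; apply: contra_notT => /h.
Qed.

Lemma fsum_supp (P : set conf) (f : conf -> C) : (forall r, f r != 0 -> P r) ->
  \sum_(r \in [set: conf]) f r = \sum_(r \in P) f r.
Proof.
move=> h; rewrite (fsbig_widen P setT) // => r [_ /= nP].
by apply/eqP; move: nP; apply: contra_notT => /h.
Qed.

Lemma fsum_nz (P : set conf) (f : conf -> C) : \sum_(r \in P) f r != 0 ->
  exists2 r, P r & f r != 0.
Proof. by move/(@fsbigN1 _ _ _ unit _ P (fun _ => f) tt) => [r Pr fr]; exists r. Qed.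

End Ops.
Section Ampl.
Variable D : nat.
Variable p : site D -> nat.

Local Notation site := (site D).
Local Notation conf := (conf D).
Local Notation op := (op D).
Local Notation valid := (valid p).
Local Notation ampl := (ampliation p).

Definition upd (sg : conf) (F : set site) (tau : conf) : conf :=
  fun s => if `[< F s >] then tau s else sg s.

Lemma upd_in sg F tau s : F s -> upd sg F tau s = tau s.
Proof. by move=> Fs; rewrite /upd; case: asboolP. Qed.
Lemma upd_out sg F tau s : ~ F s -> upd sg F tau s = sg s.
Proof. by move=> Fs; rewrite /upd; case: asboolP. Qed.
Lemma upd_valid sg F tau : valid sg -> valid tau -> valid (upd sg F tau).
Proof. by move=> v1 v2 s; rewrite /upd; case: asboolP. Qed.

Lemma ampl_mono F F' K : ampl F K -> F `<=` F' -> ampl F' K.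
Proof.
move=> [h1 h2] FF'; split.
  move=> sg tau /h1 [v1 v2 ag]; split=> // s nF; apply: ag => Fs; exact/nF/FF'.
move=> sg tau sg' tau' v1 v2 v3 v4 a1 a2 o1 o2.
have key : forall a b a' b', valid a -> valid b -> valid a' -> valid b' ->
   agree_off F' a' b' -> agree_on F' a a' -> agree_on F' b b' ->
   K a b != 0 -> K a b = K a' b'.
  move=> a b a' b' w1 w2 w3 w4 ag' oa ob nz.
  have [_ _ ag] := h1 _ _ nz.
  apply: h2 => //.
  - move=> s nFs; have [F's|nF's] := pselect (F' s).
      by rewrite -oa // -ob // ag.
    exact: ag'.
  - by move=> s Fs; apply/oa/FF'.
  - by move=> s Fs; apply/ob/FF'.
have [z|nz] := eqVneq (K sg tau) 0.
  have [z'|nz'] := eqVneq (K sg' tau') 0; first by rewrite z z'.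
  rewrite (key sg' tau' sg tau) //.
    by move=> s Fs; rewrite (o1 s Fs).
  by move=> s Fs; rewrite (o2 s Fs).
exact: key.
Qed.

Lemma ampl_inter F G K : ampl F K -> ampl G K -> ampl (F `&` G) K.
Proof.
move=> [f1 f2] [g1 g2]; split.
  move=> sg tau nz; have [v1 v2 aF] := f1 _ _ nz; have [_ _ aG] := g1 _ _ nz.
  split=> // s nFG; have [Fs|nFs] := pselect (F s); last exact: aF.
  have [Gs|nGs] := pselect (G s); last exact: aG.
  by exfalso; apply: nFG.
have key : forall a b a' b', valid a -> valid b -> valid a' -> valid b' ->
   agree_off (F `&` G) a' b' -> agree_on (F `&` G) a a' -> agree_on (F `&` G) b b' ->
   K a b != 0 -> K a b = K a' b'.
  move=> a b a' b' w1 w2 w3 w4 ag' oa ob nz.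
  have [_ _ aF] := f1 _ _ nz; have [_ _ aG] := g1 _ _ nz.
  have offFG : forall s, ~ (F `&` G) s -> a s = b s.
    move=> s nFG; have [Fs|nFs] := pselect (F s); last exact: aF.
    have [Gs|nGs] := pselect (G s); last exact: aG.
    by exfalso; apply: nFG.
  pose r := upd a' F a; pose r' := upd b' F b.
  have vr : valid r by apply: upd_valid.
  have vr' : valid r' by apply: upd_valid.
  transitivity (K r r').
    apply: f2 => //.
    - move=> s nFs; rewrite /r /r' !upd_out //; apply: ag' => -[]//.
    - by move=> s Fs; rewrite /r upd_in.
    - by move=> s Fs; rewrite /r' upd_in.
  apply: g2 => //.
  - move=> s nGs; rewrite /r /r'; have [Fs|nFs] := pselect (F s).
      by rewrite !upd_in //; apply: offFG => -[].
    by rewrite !upd_out //; apply: ag' => -[].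
  - by move=> s nGs; apply: ag' => -[].
  - move=> s Gs; rewrite /r; have [Fs|nFs] := pselect (F s).
      by rewrite upd_in //; apply: oa.
    by rewrite upd_out.
  - move=> s Gs; rewrite /r'; have [Fs|nFs] := pselect (F s).
      by rewrite upd_in //; apply: ob.
    by rewrite upd_out.
move=> sg tau sg' tau' v1 v2 v3 v4 a1 a2 o1 o2.
have [z|nz] := eqVneq (K sg tau) 0.
  have [z'|nz'] := eqVneq (K sg' tau') 0; first by rewrite z z'.
  rewrite (key sg' tau' sg tau) //.
    by move=> s Fs; rewrite (o1 s Fs).
  by move=> s Fs; rewrite (o2 s Fs).
exact: key.
Qed.

Lemma ampl_zero F : ampl F (@opzero D).
Proof. by split=> [sg tau|]; rewrite /opzero ?eqxx. Qed.

Lemma ampl_one0 : ampl set0 (opone p).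
Proof.
split.
  move=> sg tau; rewrite /opone; case: asboolP => [[-> v] _|]; last by rewrite eqxx.
  by split.
move=> sg tau sg' tau' v1 v2 v3 v4 a1 a2 _ _.
have e1 : sg = tau by apply/funext => s; apply: a1.
have e2 : sg' = tau' by apply/funext => s; apply: a2.
by rewrite /opone (asboolT (conj e1 v1)) (asboolT (conj e2 v3)).
Qed.

Lemma ampl_one F : ampl F (opone p).
Proof. by apply: ampl_mono ampl_one0 _. Qed.

Lemma ampl_add F x y : ampl F x -> ampl F y -> ampl F (opadd x y).
Proof.
move=> [x1 x2] [y1 y2]; split.
  move=> sg tau; rewrite /opadd; have [z|nz] := eqVneq (x sg tau) 0.
    by rewrite z add0r => /y1.
  by move=> _; apply: x1.
move=> sg tau sg' tau' v1 v2 v3 v4 a1 a2 o1 o2.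
by rewrite /opadd (x2 sg tau sg' tau') // (y2 sg tau sg' tau').
Qed.

Lemma ampl_scale F c x : ampl F x -> ampl F (opscale c x).
Proof.
move=> [x1 x2]; split.
  by move=> sg tau; rewrite /opscale mulf_eq0 negb_or => /andP[_ /x1].
move=> sg tau sg' tau' v1 v2 v3 v4 a1 a2 o1 o2.
by rewrite /opscale (x2 sg tau sg' tau').
Qed.

Lemma ampl_adj F x : ampl F x -> ampl F (opadj x).
Proof.
move=> [x1 x2]; split.
  move=> sg tau; rewrite /opadj conjC_eq0 => /x1 [v1 v2 a]; split=> // s ns.
  by rewrite a.
move=> sg tau sg' tau' v1 v2 v3 v4 a1 a2 o1 o2; rewrite /opadj (x2 tau sg tau' sg') //.
- by move=> s ns; rewrite a1.
- by move=> s ns; rewrite a2.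
Qed.

Lemma opmul_supp F x y sg tau : ampl F x ->
  opmul x y sg tau = \sum_(rho \in cfgs p F sg) x sg rho * y rho tau.
Proof.
move=> [x1 _]; rewrite /opmul (fsum_supp (P := cfgs p F sg)) // => r.
by rewrite mulf_eq0 negb_or => /andP[/x1 [_ ? ?] _].
Qed.

Lemma ampl_mul F x y : finite_set F -> ampl F x -> ampl F y -> ampl F (opmul x y).
Proof.
move=> fF ax ay; have [x1 x2] := ax; have [y1 y2] := ay; split.
  move=> sg tau; rewrite /opmul => /fsum_nz [r _].
  rewrite mulf_eq0 negb_or => /andP[/x1 [v1 v2 a1] /y1 [_ v3 a2]].
  by split=> // s ns; rewrite a1 // a2.
move=> sg tau sg' tau' v1 v2 v3 v4 a1 a2 o1 o2.
rewrite (opmul_supp _ _ _ ax) (opmul_supp _ _ _ ax).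
rewrite (reindex_fsbig (fun r => upd sg' F r) (cfgs p F sg) (cfgs p F sg')).
  apply: eq_fsbigr => r /set_mem [vr ar]; congr (_ * _).
    apply: x2 => //; first exact: upd_valid.
    - by move=> s ns; rewrite upd_out.
    - by move=> s Fs; rewrite upd_in.
  apply: y2 => //; first exact: upd_valid.
  - by move=> s ns; rewrite -ar // a1.
  - by move=> s ns; rewrite upd_out // a2.
  - by move=> s Fs; rewrite upd_in.
split.
- move=> r [vr ar]; split; first exact: upd_valid.
  by move=> s ns; rewrite upd_out.
- move=> r1 r2 /set_mem [_ a1'] /set_mem [_ a2'] e; apply/funext => s.
  have [Fs|nFs] := pselect (F s).
    by move/(congr1 (fun f => f s)): e; rewrite !upd_in.
  by rewrite -a1' // -a2'.
- move=> r [vr ar]; exists (upd sg F r).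
    split; first exact: upd_valid.
    by move=> s ns; rewrite upd_out.
  apply/funext => s; have [Fs|nFs] := pselect (F s).
    by rewrite !upd_in.
  by rewrite !upd_out // ar.
Qed.

End Ampl.
Section Alg.
Variable D : nat.
Variable p : site D -> nat.

Local Notation site := (site D).
Local Notation conf := (conf D).
Local Notation op := (op D).
Local Notation valid := (valid p).
Local Notation ampl := (ampliation p).

Lemma cfgs_eq F sg r : agree_off F sg r -> cfgs p F r = cfgs p F sg.
Proof.
move=> a; apply/seteqP; split=> q [vq aq]; split=> // s ns.
  by rewrite a // aq.
by rewrite -a // aq.
Qed.

Lemma opmulA F x y z : finite_set F -> ampl F x -> ampl F y -> ampl F z ->
  opmul (opmul x y) z = opmul x (opmul y z).
Proof.
move=> fF ax ay az; apply/funext => sg; apply/funext => tau.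
rewrite (opmul_supp _ _ _ (ampl_mul fF ax ay)) (opmul_supp _ _ _ ax).
have e1 : forall r, opmul x y sg r * z r tau =
   \sum_(r' \in cfgs p F sg) (x sg r' * y r' r * z r tau).
  by move=> r; rewrite (opmul_supp _ _ _ ax) mulr_fsuml.
under eq_fsbigr do rewrite e1.
have e2 : {in cfgs p F sg, forall r', x sg r' * opmul y z r' tau =
   \sum_(r \in cfgs p F sg) (x sg r' * y r' r * z r tau)}.
  move=> r' /set_mem [vr ar]; rewrite (opmul_supp _ _ _ ay) (cfgs_eq ar) mulr_fsumr.
  by apply: eq_fsbigr => r _; rewrite mulrA.
rewrite (eq_fsbigr _ _ e2) exchange_fsbig //; exact: cfgs_fin.
Qed.

Lemma opmul1 F x : ampl F x -> opmul x (opone p) = x.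
Proof.
move=> [x1 _]; apply/funext => sg; apply/funext => tau.
rewrite /opmul (fsum1 (r0 := tau)).
  rewrite /opone; case: asboolP => [_|h]; first by rewrite mulr1.
  have [z|/x1 [_ v _]] := eqVneq (x sg tau) 0; first by rewrite z mul0r.
  by exfalso; apply: h.
move=> r; rewrite /opone; case: asboolP => [[-> _]//|_]; by rewrite mulr0 eqxx.
Qed.

Lemma op1mul F x : ampl F x -> opmul (opone p) x = x.
Proof.
move=> [x1 _]; apply/funext => sg; apply/funext => tau.
rewrite /opmul (fsum1 (r0 := sg)).
  rewrite /opone; case: asboolP => [_|h]; first by rewrite mul1r.
  have [z|/x1 [v _ _]] := eqVneq (x sg tau) 0; first by rewrite z mulr0.
  by exfalso; apply: h.
move=> r; rewrite /opone; case: asboolP => [[-> _]//|_]; by rewrite mul0r eqxx.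
Qed.

Definition eu (s : site) (a b : nat) : op :=
  fun sg tau => if `[< valid sg /\ valid tau /\ sg s = a /\ tau = setc sg s b >]
                then 1 else 0.

Lemma setc_id (sg : conf) s : setc sg s (sg s) = sg.
Proof. by apply/funext => t; rewrite /setc; case: eqP => [->|]. Qed.
Lemma setc_setc (sg : conf) s a b : setc (setc sg s a) s b = setc sg s b.
Proof. by apply/funext => t; rewrite /setc; case: eqP. Qed.
Lemma setc_at (sg : conf) s a : setc sg s a s = a.
Proof. by rewrite /setc eqxx. Qed.
Lemma setc_valid (sg : conf) s a : valid sg -> (a < p s)%N -> valid (setc sg s a).
Proof. by move=> v h t; rewrite /setc; case: eqP => [->|]. Qed.

Lemma ampl_eu s a b : ampl [set s] (eu s a b).
Proof.
split.
  move=> sg tau; rewrite /eu; case: asboolP => [[v1 [v2 [_ e]]] _|]; last by rewrite eqxx.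
  split=> // t /= nts; rewrite e /setc; case: eqP => // ts; by exfalso; apply: nts.
move=> sg tau sg' tau' v1 v2 v3 v4 a1 a2 o1 o2.
have o1' := o1 s erefl; have o2' := o2 s erefl.
have eq1 : forall u w, agree_off [set s] u w -> w = setc u s (w s).
  move=> u w h; apply/funext => t; rewrite /setc; case: eqP => [->//|ts].
  by rewrite h.
have hh : forall u w u' w', agree_off [set s] u w -> u s = u' s -> w s = w' s ->
    (u' s = a /\ w' = setc u' s b) -> (u s = a /\ w = setc u s b).
  move=> u w u' w' ag e1 e2 [h1 h2]; split; first by rewrite e1.
  by rewrite (eq1 _ _ ag) e2 h2 setc_at.
rewrite /eu; congr (if _ then _ else _); apply: asbool_equiv_eq; split.
  move=> [_ [_ h]]; do 2 split => //; first [exact: (hh _ _ _ _ a1 o1' o2' h) | exact: (hh _ _ _ _ a2 (esym o1') (esym o2') h)].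
move=> [_ [_ h]]; do 2 split => //; first [exact: (hh _ _ _ _ a1 o1' o2' h) | exact: (hh _ _ _ _ a2 (esym o1') (esym o2') h)].
Qed.

Lemma eu_mul s a b K sg tau :
  opmul (eu s a b) K sg tau =
  if `[< valid sg /\ sg s = a /\ (b < p s)%N >] then K (setc sg s b) tau else 0.
Proof.
rewrite /opmul (fsum1 (r0 := setc sg s b)).
  rewrite /eu; case: asboolP => [[v1 [v2 [h1 _]]]|h].
    rewrite asboolT ?mul1r //; split=> //; split=> //.
    by have := v2 s; rewrite setc_at.
  case: asboolP => [[v [h1 h2]]|]; last by rewrite mul0r.
  by exfalso; apply: h; do 2 split => //; exact: setc_valid.
move=> r; rewrite /eu; case: asboolP => [[_ [_ [_ ->]]]//|_]; by rewrite mul0r eqxx.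
Qed.

Lemma mul_eu s a b K sg tau :
  opmul K (eu s a b) sg tau =
  if `[< valid tau /\ tau s = b /\ (a < p s)%N >] then K sg (setc tau s a) else 0.
Proof.
rewrite /opmul (fsum1 (r0 := setc tau s a)).
  rewrite /eu; case: asboolP => [[v1 [v2 [h1 h2]]]|h].
    rewrite asboolT ?mulr1 //; split=> //; split; first by rewrite h2 setc_at.
    by have := v1 s; rewrite h1.
  case: asboolP => [[v [h1 h2]]|]; last by rewrite mulr0.
  exfalso; apply: h; split; first exact: setc_valid.
  split=> //; split; first by rewrite setc_at.
  by rewrite setc_setc -h1 setc_id.
move=> r; rewrite /eu; case: asboolP => [[_ [_ [h1 ->]]]|_]; last by rewrite mulr0 eqxx.
by move=> _; rewrite setc_setc -h1 setc_id.
Qed.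

Lemma comm_site s y :
  (forall sg tau, y sg tau != 0 -> valid sg /\ valid tau) ->
  (forall a b, (a < p s)%N -> (b < p s)%N -> opmul (eu s a b) y = opmul y (eu s a b)) ->
  ampl [set t | t <> s] y.
Proof.
move=> hv hc.
have eqn : forall a b sg tau, (a < p s)%N -> (b < p s)%N ->
   opmul (eu s a b) y sg tau = opmul y (eu s a b) sg tau.
  by move=> a b sg tau ha hb; rewrite hc.
have z1 : forall sg tau, valid sg -> valid tau -> sg s <> tau s -> y sg tau = 0.
  move=> sg tau v1 v2 ne; have := eqn (sg s) (sg s) sg tau (v1 s) (v1 s).
  rewrite eu_mul mul_eu asboolT; last by split.
  rewrite setc_id => ->; case: asboolP => // -[_ [h _]].
  by exfalso; apply: ne.
split.
  move=> sg tau nz; have [v1 v2] := hv _ _ nz; split=> // t /= nt.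
  have -> : t = s by apply: contra_notP nt.
  have [//|ne] := pselect (sg s = tau s); by move: nz; rewrite z1 // eqxx.
move=> sg tau sg' tau' v1 v2 v3 v4 a1 a2 o1 o2.
have e1 := a1 s (fun h => h erefl); have e2 := a2 s (fun h => h erefl).
have hs' : sg' = setc sg s (sg' s).
  apply/funext => t; rewrite /setc; case: eqP => [->//|ts]; by rewrite o1.
have ht' : tau' = setc tau s (sg' s).
  apply/funext => t; rewrite /setc; case: eqP => [->//|ts]; by rewrite -o2.
have := eqn (sg' s) (sg s) (setc sg s (sg' s)) tau (v3 s) (v1 s).
rewrite eu_mul mul_eu asboolT; last by split; [exact: setc_valid|split; [rewrite setc_at|]].
rewrite asboolT; last by split => //; split => //; rewrite e1.
by rewrite setc_setc setc_id -hs' -ht'.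
Qed.

Lemma comm_disj F G x y : ampl F x -> ampl G y -> (forall t, F t -> G t -> False) ->
  opmul x y = opmul y x.
Proof.
move=> [x1 x2] [y1 y2] dFG; apply/funext => sg; apply/funext => tau.
pose r0 := upd sg F tau; pose r1 := upd sg G tau.
have -> : opmul x y sg tau = x sg r0 * y r0 tau.
  rewrite /opmul (fsum1 (r0 := r0)) // => r; rewrite mulf_eq0 negb_or.
  move=> /andP[/x1 [_ _ a1] /y1 [_ _ a2]]; apply/funext => t; rewrite /r0 /upd.
  case: asboolP => [Ft|nFt]; last by rewrite a1.
  by rewrite a2 // => Gt; apply: (dFG t).
have -> : opmul y x sg tau = y sg r1 * x r1 tau.
  rewrite /opmul (fsum1 (r0 := r1)) // => r; rewrite mulf_eq0 negb_or.
  move=> /andP[/y1 [_ _ a1] /x1 [_ _ a2]]; apply/funext => t; rewrite /r1 /upd.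
  case: asboolP => [Gt|nGt]; last by rewrite a1.
  by rewrite a2 // => Ft; apply: (dFG t).
have cond : forall u, u != 0 -> u = x sg r0 * y r0 tau \/ u = y sg r1 * x r1 tau ->
   [/\ valid sg, valid tau & forall t, ~ F t -> ~ G t -> sg t = tau t].
  move=> u nu [eu|eu]; rewrite eu mulf_eq0 negb_or in nu; case/andP: nu.
    move=> /x1 [v1 v0 a1] /y1 [_ v2 a2]; split=> // t nF nG.
    by rewrite a1 // a2.
  move=> /y1 [v1 v0 a1] /x1 [_ v2 a2]; split=> // t nF nG.
  by rewrite a1 // a2.
have main : [/\ valid sg, valid tau & forall t, ~ F t -> ~ G t -> sg t = tau t] ->
   x sg r0 * y r0 tau = y sg r1 * x r1 tau.
  move=> [v1 v2 ag]; have vr0 : valid r0 by apply: upd_valid.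
  have vr1 : valid r1 by apply: upd_valid.
  rewrite mulrC; congr (_ * _).
    apply: y2 => //.
    - move=> t nG; rewrite /r0 /upd; case: asboolP => // nF; exact: ag.
    - by move=> t nG; rewrite /r1 upd_out.
    - move=> t Gt; rewrite /r0 upd_out // => Ft; exact: (dFG t).
    - by move=> t Gt; rewrite /r1 upd_in.
  apply: x2 => //.
  - by move=> t nF; rewrite /r0 upd_out.
  - move=> t nF; rewrite /r1 /upd; case: asboolP => // nG; exact: ag.
  - move=> t Ft; rewrite /r1 upd_out // => Gt; exact: (dFG t).
  - by move=> t Ft; rewrite /r0 upd_in.
have [z|nz] := eqVneq (x sg r0 * y r0 tau) 0.
  have [z'|nz'] := eqVneq (y sg r1 * x r1 tau) 0; first by rewrite z z'.
  by apply: main; apply: (cond _ nz'); right.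
by apply: main; apply: (cond _ nz); left.
Qed.

End Alg.
Section OpMonoid.
Variable D : nat.
Lemma opaddA : associative (@opadd D).
Proof. by move=> x y z; apply/funext => a; apply/funext => b; rewrite /opadd addrA. Qed.
Lemma opaddC : commutative (@opadd D).
Proof. by move=> x y; apply/funext => a; apply/funext => b; rewrite /opadd addrC. Qed.
Lemma op0add : left_id (@opzero D) (@opadd D).
Proof. by move=> x; apply/funext => a; apply/funext => b; rewrite /opadd /opzero add0r. Qed.
HB.instance Definition _ := Monoid.isComLaw.Build (op D) (@opzero D) (@opadd D) opaddA opaddC op0add.
End OpMonoid.

Section Dist.
Variable D : nat.
Variable p : site D -> nat.
Local Notation site := (site D).
Local Notation conf := (conf D).
Local Notation op := (op D).
Local Notation valid := (valid p).
Local Notation ampl := (ampliation p).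
Local Notation "\osum_ ( i <- r ) F" := (\big[@opadd D/@opzero D]_(i <- r) F)
  (at level 41, F at level 41, i, r at level 50).

Lemma opsum_apply (I : Type) (r : seq I) (P : pred I) (F : I -> op) sg tau :
  (\big[@opadd D/@opzero D]_(i <- r | P i) F i) sg tau = \sum_(i <- r | P i) F i sg tau.
Proof.
elim: r => [|a r IH]; first by rewrite !big_nil.
rewrite !big_cons; case: (P a) => //; by rewrite /opadd IH.
Qed.

Lemma ampl_sum F (I : Type) (r : seq I) (P : pred I) (f : I -> op) :
  (forall i, P i -> ampl F (f i)) -> ampl F (\big[@opadd D/@opzero D]_(i <- r | P i) f i).
Proof.
move=> h; elim: r => [|a r IH]; first by rewrite big_nil; exact: ampl_zero.
rewrite big_cons; case: ifP => Pa //; exact: ampl_add (h _ Pa) IH.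
Qed.

Lemma opmul_addl F x y z : finite_set F -> ampl F x -> ampl F y ->
  opmul (opadd x y) z = opadd (opmul x z) (opmul y z).
Proof.
move=> fF ax ay; apply/funext => sg; apply/funext => tau.
rewrite /opadd (opmul_supp _ _ _ (ampl_add ax ay)) (opmul_supp _ _ _ ax) (opmul_supp _ _ _ ay).
under eq_fsbigr do rewrite mulrDl.
by rewrite fsbig_split //; apply: cfgs_fin.
Qed.

Lemma opmul_addr F x y z : finite_set F -> ampl F z ->
  opmul z (opadd x y) = opadd (opmul z x) (opmul z y).
Proof.
move=> fF az; apply/funext => sg; apply/funext => tau.
rewrite /opadd (opmul_supp _ _ _ az) (opmul_supp _ _ _ az) (opmul_supp _ _ _ az).
under eq_fsbigr do rewrite mulrDr.
by rewrite fsbig_split //; apply: cfgs_fin.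
Qed.

Lemma opmul_scalel c (x z : op) : opmul (opscale c x) z = opscale c (opmul x z).
Proof.
apply/funext => sg; apply/funext => tau; rewrite /opscale /opmul mulr_fsumr.
by apply: eq_fsbigr => r _; rewrite mulrA.
Qed.

Lemma opmul_scaler c (x z : op) : opmul z (opscale c x) = opscale c (opmul z x).
Proof.
apply/funext => sg; apply/funext => tau; rewrite /opscale /opmul mulr_fsumr.
by apply: eq_fsbigr => r _; rewrite mulrCA.
Qed.

Lemma opmul0l (z : op) : opmul (@opzero D) z = @opzero D.
Proof.
apply/funext => sg; apply/funext => tau; rewrite /opmul /opzero fsbig1 // => r _; exact: mul0r.
Qed.

Lemma opmul0r (z : op) : opmul z (@opzero D) = @opzero D.
Proof.
apply/funext => sg; apply/funext => tau; rewrite /opmul /opzero fsbig1 // => r _; exact: mulr0.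
Qed.

Lemma opmul_suml F (I : Type) (r : seq I) (P : pred I) (f : I -> op) z :
  finite_set F -> (forall i, P i -> ampl F (f i)) ->
  opmul (\big[@opadd D/@opzero D]_(i <- r | P i) f i) z =
  \big[@opadd D/@opzero D]_(i <- r | P i) opmul (f i) z.
Proof.
move=> fF h; elim: r => [|a r IH]; first by rewrite !big_nil opmul0l.
rewrite !big_cons; case: ifP => Pa //.
by rewrite (opmul_addl _ fF (h _ Pa) (ampl_sum r h)) IH.
Qed.

Lemma opmul_sumr F (I : Type) (r : seq I) (P : pred I) (f : I -> op) z :
  finite_set F -> ampl F z ->
  opmul z (\big[@opadd D/@opzero D]_(i <- r | P i) f i) =
  \big[@opadd D/@opzero D]_(i <- r | P i) opmul z (f i).
Proof.
move=> fF az; elim: r => [|a r IH]; first by rewrite !big_nil opmul0r.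
rewrite !big_cons; case: ifP => Pa //.
by rewrite (opmul_addr _ _ fF az) IH.
Qed.

End Dist.
Section Cexp.
Variable D : nat.
Variable p : site D -> nat.
Hypothesis p_pos : forall s, (0 < p s)%N.
Local Notation site := (site D).
Local Notation conf := (conf D).
Local Notation op := (op D).
Local Notation valid := (valid p).
Local Notation ampl := (ampliation p).

Definition Ex (s : site) (z : op) : op :=
  \big[@opadd D/@opzero D]_(a < p s) \big[@opadd D/@opzero D]_(b < p s)
    opscale ((p s)%:R^-1) (opmul (eu p s a b) (opmul z (eu p s b a))).

Lemma Ex_kernel s z sg tau : Ex s z sg tau =
  if `[< valid sg /\ valid tau /\ sg s = tau s >] then
    (p s)%:R^-1 * \sum_(b < p s) z (setc sg s b) (setc tau s b) else 0.
Proof.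
rewrite /Ex opsum_apply.
under eq_bigr => a _ do rewrite opsum_apply /opscale.
under eq_bigr => a _ do under eq_bigr => b _ do rewrite eu_mul mul_eu.
have [v1|v1] := pselect (valid sg); last first.
  rewrite asboolF; last by case.
  rewrite big1 // => a _; rewrite big1 // => b _; rewrite asboolF ?mulr0 //; by case.
have [v2|v2] := pselect (valid tau); last first.
  rewrite asboolF; last by case=> _ [].
  rewrite big1 // => a _; rewrite big1 // => b _.
  case: asboolP => _; last by rewrite mulr0.
  by rewrite asboolF ?mulr0 //; case.
rewrite (bigD1 (Ordinal (v1 s))) //= [X in _ + X]big1 ?addr0; last first.
  move=> a /eqP ne; rewrite big1 // => b _; rewrite asboolF ?mulr0 //.
  case=> _ [h _]; apply: ne; exact/val_inj.
have [e|ne] := eqVneq (sg s) (tau s).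
  rewrite asboolT; last by split.
  rewrite mulr_sumr; apply: eq_bigr => b _.
  rewrite asboolT; last by split=> //; split=> //.
  by rewrite asboolT //; split=> //; split=> //.
rewrite asboolF; last by case=> _ [_ h]; move/eqP: ne.
rewrite big1 // => b _; rewrite asboolT; last by split.
by rewrite asboolF ?mulr0 //; case=> _ [h _]; move/eqP: ne; rewrite h.
Qed.


Lemma Ex_ampl_s s z : ampl [set t | t <> s] (Ex s z).
Proof.
split.
  move=> sg tau; rewrite Ex_kernel; case: asboolP => [[v1 [v2 e]] _|]; last by rewrite eqxx.
  split=> // t /= nt; have -> : t = s by apply: contra_notP nt.
  exact: e.
move=> sg tau sg' tau' v1 v2 v3 v4 a1 a2 o1 o2.
have e1 := a1 s (fun h => h erefl); have e2 := a2 s (fun h => h erefl).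
have h1 : forall b, setc sg s b = setc sg' s b.
  by move=> b; apply/funext => t; rewrite /setc; case: eqP => // /o1.
have h2 : forall b, setc tau s b = setc tau' s b.
  by move=> b; apply/funext => t; rewrite /setc; case: eqP => // /o2.
rewrite !Ex_kernel asboolT; last by split.
rewrite asboolT; last by split.
by congr (_ * _); apply: eq_bigr => b _; rewrite h1 h2.
Qed.

Lemma ampl_Ex G s z : finite_set G -> ampl G z -> ampl (G `&` [set t | t <> s]) (Ex s z).
Proof.
move=> fG az.
have fK : finite_set (G `|` [set s]) by rewrite finite_setU; split=> //; exact: finite_set1.
have aK : ampl (G `|` [set s]) (Ex s z).
  apply: ampl_sum => a _; apply: ampl_sum => b _; apply: ampl_scale.
  apply: ampl_mul => //; first exact: ampl_mono (ampl_eu _ _ _ _) _.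
  apply: ampl_mul => //; first exact: ampl_mono az _.
  exact: ampl_mono (ampl_eu _ _ _ _) _.
apply: ampl_mono (ampl_inter aK (Ex_ampl_s s z)) _.
by move=> t [[Gt|/= ->] nt] //; split.
Qed.

Lemma Ex_id G s z : ampl G z -> ~ G s -> Ex s z = z.
Proof.
move=> [z1 z2] nGs; apply/funext => sg; apply/funext => tau; rewrite Ex_kernel.
case: asboolP => [[v1 [v2 e]]|nc]; last first.
  have [//|nz] := eqVneq (z sg tau) 0.
  have [v1 v2 a] := z1 _ _ nz; exfalso; apply: nc; do 2 split=> //; exact: a.
have [ag|nag] := pselect (agree_off G sg tau).
  have -> : \sum_(b < p s) z (setc sg s b) (setc tau s b) = \sum_(b < p s) z sg tau.
    apply: eq_bigr => b _; apply: z2 => //; try exact: setc_valid.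
    - move=> t nt; rewrite /setc; case: eqP => // _; exact: ag.
    - by move=> t Gt; rewrite /setc; case: eqP => // ts; rewrite ts in Gt.
    - by move=> t Gt; rewrite /setc; case: eqP => // ts; rewrite ts in Gt.
  rewrite sumr_const card_ord -[z sg tau *+ p s]mulr_natl mulrA mulVf ?mul1r //.
  by rewrite pnatr_eq0 -lt0n.
have -> : z sg tau = 0.
  apply/eqP; apply: contra_notT nag => /z1 [_ _ a]; exact: a.
rewrite big1 ?mulr0 // => b _; apply/eqP; apply: contra_notT nag.
move=> /z1 [_ _ a] t nt; have [ts|ts] := eqVneq t s; first by rewrite ts.
by have := a t nt; rewrite /setc (negPf ts).
Qed.

Lemma Ex_add s x y : Ex s (opadd x y) = opadd (Ex s x) (Ex s y).
Proof.
apply/funext => sg; apply/funext => tau; rewrite /opadd !Ex_kernel.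
case: asboolP => _; last by rewrite addr0.
by rewrite -mulrDr big_split.
Qed.

Lemma Ex_zero s : Ex s (@opzero D) = @opzero D.
Proof.
apply/funext => sg; apply/funext => tau; rewrite Ex_kernel.
by case: asboolP => _ //; rewrite big1 ?mulr0.
Qed.

Lemma Ex_scale s c x : Ex s (opscale c x) = opscale c (Ex s x).
Proof.
apply/funext => sg; apply/funext => tau; rewrite /opscale !Ex_kernel.
case: asboolP => _; last by rewrite mulr0.
by rewrite -mulr_sumr mulrCA.
Qed.

Lemma Ex_sum s (I : Type) (r : seq I) (f : I -> op) :
  Ex s (\big[@opadd D/@opzero D]_(i <- r) f i) = \big[@opadd D/@opzero D]_(i <- r) Ex s (f i).
Proof.
elim: r => [|a r IH]; first by rewrite !big_nil Ex_zero.
by rewrite !big_cons Ex_add IH.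
Qed.

Lemma Ex_mulr F G s z w : finite_set F -> finite_set G -> ampl F z -> ampl G w -> ~ G s ->
  Ex s (opmul z w) = opmul (Ex s z) w.
Proof.
move=> fF fG az aw nGs.
pose K := F `|` G `|` [set s].
have fK : finite_set K by rewrite !finite_setU; do 2 split=> //; exact: finite_set1.
have aF : forall x, ampl F x -> ampl K x by move=> x ax; apply: ampl_mono ax _ => t Ft; left; left.
have aG : forall x, ampl G x -> ampl K x by move=> x ax; apply: ampl_mono ax _ => t Ft; left; right.
have aE : forall a b, ampl K (eu p s a b) by move=> a b; apply: ampl_mono (ampl_eu _ _ _ _) _ => t ->; right.
rewrite /Ex (@opmul_suml D p K) //; last first.
  move=> a _; apply: ampl_sum => b _; apply: ampl_scale.
  by apply: ampl_mul => //; apply: ampl_mul => //; apply: aF.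
apply: eq_bigr => a _; rewrite (@opmul_suml D p K) //; last first.
  move=> b _; apply: ampl_scale.
  by apply: ampl_mul => //; apply: ampl_mul => //; apply: aF.
apply: eq_bigr => b _; rewrite opmul_scalel; congr opscale.
rewrite (opmulA fK (aF _ az) (aG _ aw) (aE _ _)).
rewrite (comm_disj aw (ampl_eu _ _ _ _)); last by move=> t Gt /= ts; apply: nGs; rewrite -ts.
rewrite -(opmulA fK (aF _ az) (aE _ _) (aG _ aw)).
rewrite -(opmulA fK (aE _ _) _ (aG _ aw)) //.
by apply: ampl_mul => //; apply: aF.
Qed.

Lemma Ex_mull F G s z w : finite_set F -> finite_set G -> ampl F z -> ampl G w -> ~ G s ->
  Ex s (opmul w z) = opmul w (Ex s z).
Proof.
move=> fF fG az aw nGs.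
pose K := F `|` G `|` [set s].
have fK : finite_set K by rewrite !finite_setU; do 2 split=> //; exact: finite_set1.
have aF : forall x, ampl F x -> ampl K x by move=> x ax; apply: ampl_mono ax _ => t Ft; left; left.
have aG : forall x, ampl G x -> ampl K x by move=> x ax; apply: ampl_mono ax _ => t Ft; left; right.
have aE : forall a b, ampl K (eu p s a b) by move=> a b; apply: ampl_mono (ampl_eu _ _ _ _) _ => t ->; right.
rewrite /Ex (@opmul_sumr D p K) //; last exact: aG.
apply: eq_bigr => a _; rewrite (@opmul_sumr D p K) //; last exact: aG.
apply: eq_bigr => b _; rewrite opmul_scaler; congr opscale.
rewrite (opmulA fK (aG _ aw) (aF _ az) (aE _ _)).
rewrite -(opmulA fK (aE _ _) (aG _ aw)); last by apply: ampl_mul => //; apply: aF.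
rewrite -(comm_disj aw (ampl_eu _ _ _ _)); last by move=> t Gt /= ts; apply: nGs; rewrite -ts.
rewrite (opmulA fK (aG _ aw) (aE _ _)) //.
by apply: ampl_mul => //; apply: aF.
Qed.

End Cexp.
Section Iter.
Variable D : nat.
Variable p : site D -> nat.
Hypothesis p_pos : forall s, (0 < p s)%N.
Local Notation site := (site D).
Local Notation conf := (conf D).
Local Notation op := (op D).
Local Notation valid := (valid p).
Local Notation ampl := (ampliation p).

Definition Exs (L : seq site) (z : op) : op := foldr (fun s acc => Ex p s acc) z L.

Lemma ampl_Exs L G z : finite_set G -> ampl G z ->
  ampl (G `&` [set t | t \notin L]) (Exs L z).
Proof.
move=> fG az; elim: L => [|s L IH] /=.
  by apply: ampl_mono az _ => t Gt; split.
have fG' : finite_set (G `&` [set t | t \notin L]) by apply: finite_setIl.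
apply: ampl_mono (ampl_Ex s fG' IH) _ => t [[Gt tL] ts]; split=> //=.
by rewrite in_cons negb_or tL andbT; apply/eqP.
Qed.

Lemma Exs_id L G z : ampl G z -> (forall t, t \in L -> ~ G t) -> Exs L z = z.
Proof.
move=> az hL; elim: L hL => [//|s L IH] hL /=.
rewrite IH; last by move=> t tL; apply: hL; rewrite in_cons tL orbT.
by apply: (Ex_id p_pos az); apply: hL; rewrite in_cons eqxx.
Qed.

Lemma Exs_mulr L F G z w : finite_set F -> finite_set G -> ampl F z -> ampl G w ->
  (forall t, t \in L -> ~ G t) -> Exs L (opmul z w) = opmul (Exs L z) w.
Proof.
move=> fF fG az aw; elim: L => [//|s L IH] hL /=.
rewrite IH; last by move=> t tL; apply: hL; rewrite in_cons tL orbT.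
apply: (Ex_mulr (finite_setIl _ fF) fG (ampl_Exs L fF az) aw).
by apply: hL; rewrite in_cons eqxx.
Qed.

Lemma Exs_mull L F G z w : finite_set F -> finite_set G -> ampl F z -> ampl G w ->
  (forall t, t \in L -> ~ G t) -> Exs L (opmul w z) = opmul w (Exs L z).
Proof.
move=> fF fG az aw; elim: L => [//|s L IH] hL /=.
rewrite IH; last by move=> t tL; apply: hL; rewrite in_cons tL orbT.
apply: (Ex_mull (finite_setIl _ fF) fG (ampl_Exs L fF az) aw).
by apply: hL; rewrite in_cons eqxx.
Qed.

Lemma Exs_sum L (I : Type) (r : seq I) (f : I -> op) :
  Exs L (\big[@opadd D/@opzero D]_(i <- r) f i) = \big[@opadd D/@opzero D]_(i <- r) Exs L (f i).
Proof.
elim: L => [//|s L IH] /=; by rewrite IH Ex_sum.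
Qed.

Inductive dec (P Q : op -> Prop) : op -> Prop :=
| dec0 : dec P Q (@opzero D)
| decS u v r : P u -> Q v -> dec P Q r -> dec P Q (opadd (opmul u v) r).

Lemma dec_add P Q x y : dec P Q x -> dec P Q y -> dec P Q (opadd x y).
Proof.
elim=> [|u v r Pu Qv _ IH] dy; first by rewrite op0add.
by rewrite -opaddA; apply: decS => //; exact: IH.
Qed.

Lemma dec_sum P Q (I : Type) (r : seq I) (f : I -> op) :
  (forall i, dec P Q (f i)) -> dec P Q (\big[@opadd D/@opzero D]_(i <- r) f i).
Proof.
move=> h; elim: r => [|a r IH]; first by rewrite big_nil; exact: dec0.
by rewrite big_cons; apply: dec_add.
Qed.

Lemma dec_mono P Q P' Q' x : (forall u, P u -> P' u) -> (forall v, Q v -> Q' v) ->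
  dec P Q x -> dec P' Q' x.
Proof.
move=> hP hQ; elim=> [|u v r Pu Qv _ IH]; first exact: dec0.
by apply: decS => //; [apply: hP|apply: hQ].
Qed.

Lemma dec_ampl K P Q x : finite_set K -> (forall u, P u -> ampl K u) -> (forall v, Q v -> ampl K v) ->
  dec P Q x -> ampl K x.
Proof.
move=> fK hP hQ; elim=> [|u v r Pu Qv _ IH]; first exact: ampl_zero.
by apply: ampl_add => //; apply: ampl_mul => //; [apply: hP|apply: hQ].
Qed.

Lemma dec_mull K P Q P' e x : finite_set K -> ampl K e ->
  (forall u, P u -> ampl K u) -> (forall v, Q v -> ampl K v) ->
  (forall u, P u -> P' (opmul e u)) ->
  dec P Q x -> dec P' Q (opmul e x).
Proof.
move=> fK aK hP hQ hP'; elim=> [|u v r Pu Qv dr IH]; first by rewrite opmul0r; exact: dec0.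
rewrite (opmul_addr _ _ fK aK) -(opmulA fK aK (hP _ Pu) (hQ _ Qv)).
by apply: decS => //; apply: hP'.
Qed.

Lemma dec_list P Q x : dec P Q x -> exists l : seq (op * op),
  x = \big[@opadd D/@opzero D]_(pr <- l) opmul pr.1 pr.2 /\
  forall pr, List.In pr l -> P pr.1 /\ Q pr.2.
Proof.
elim=> [|u v r Pu Qv _ [l [-> hl]]]; first by exists [::]; rewrite big_nil.
exists ((u, v) :: l); rewrite big_cons; split=> // pr /= [<-|/hl //]; by split.
Qed.

Definition Yab (s : site) (a b : nat) (y : op) : op :=
  opscale (p s)%:R (Ex p s (opmul (eu p s b a) y)).

Lemma resolve s y : (forall sg tau, y sg tau != 0 -> valid sg /\ valid tau) ->
  y = \big[@opadd D/@opzero D]_(a < p s) \big[@opadd D/@opzero D]_(b < p s)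
        opmul (eu p s a b) (Yab s a b y).
Proof.
move=> hy; apply/funext => sg; apply/funext => tau.
rewrite opsum_apply; under eq_bigr => a _ do rewrite opsum_apply.
have key : forall (a b : 'I_(p s)), opmul (eu p s a b) (Yab s a b y) sg tau =
   if `[< valid sg /\ valid tau /\ sg s = a /\ tau s = b >] then y sg tau else 0.
  move=> a b; rewrite eu_mul /Yab /opscale Ex_kernel.
  case: asboolP => [[v1 [e1 _]]|h]; last first.
    by rewrite asboolF // => -[v1 [v2 [e1 _]]]; apply: h; split.
  have vb : valid (setc sg s b) by apply: setc_valid.
  case: asboolP => [[_ [v2 e2]]|h]; last first.
    rewrite mulr0 asboolF // => -[_ [v2 [_ e2]]]; apply: h; do 2 split => //.
    by rewrite setc_at e2.
  rewrite setc_at in e2; rewrite asboolT; last by do 3 split => //.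
  rewrite (bigD1 b) //= [X in _ + X]big1 ?addr0; last first.
    move=> c /eqP nc; rewrite eu_mul setc_setc setc_at asboolF ?mulr0 //.
    by case=> _ [e _]; apply: nc; apply: val_inj.
  rewrite eu_mul setc_setc setc_at asboolT; last first.
    by do 2 split => //; exact: setc_valid.
  rewrite setc_setc -e1 setc_id e2 setc_id.
  by rewrite mulrA mulfV ?mul1r // pnatr_eq0 -lt0n.
under eq_bigr => a _ do under eq_bigr => b _ do rewrite key.
have [v1|v1] := pselect (valid sg); last first.
  rewrite big1 => [|a _]; last by rewrite big1 // => b _; rewrite asboolF //; case.
  by apply/eqP; apply: contra_notT v1 => /hy [].
have [v2|v2] := pselect (valid tau); last first.
  rewrite big1 => [|a _]; last by rewrite big1 // => b _; rewrite asboolF // => -[_ []].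
  by apply/eqP; apply: contra_notT v2 => /hy [].
rewrite (bigD1 (Ordinal (v1 s))) //= [X in _ + X]big1 ?addr0; last first.
  move=> a /eqP na; rewrite big1 // => b _; rewrite asboolF //.
  by case=> _ [_ [e _]]; apply: na; apply: val_inj.
rewrite (bigD1 (Ordinal (v2 s))) //= [X in _ + X]big1 ?addr0; last first.
  move=> b /eqP nb; rewrite asboolF //.
  by case=> _ [_ [_ e]]; apply: nb; apply: val_inj.
by rewrite asboolT.
Qed.

Lemma decomp (H : set site) (X : seq site) G y : finite_set G -> ampl G y ->
  G `&` H `<=` [set t | t \in X] ->
  dec (ampl (G `&` H)) (ampl (G `&` ~` H)) y.
Proof.
elim: X G y => [|s X IH] G y fG ay hX.
  have -> : y = opadd (opmul (opone p) y) (@opzero D).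
    by rewrite (op1mul ay) opaddC op0add.
  apply: decS; [exact: ampl_one|apply: ampl_mono ay _|exact: dec0].
  by move=> t Gt; split=> // Ht; have := hX t (conj Gt Ht).
have [sGH|nsGH] := pselect ((G `&` H) s); last first.
  apply: IH => // t tGH; have := hX t tGH; rewrite /= in_cons => /orP[/eqP ts|//].
  by rewrite ts in tGH.
have [Gs Hs] := sGH.
have hy : forall sg tau, y sg tau != 0 -> valid sg /\ valid tau.
  by case: ay => y1 _ sg tau /y1 [].
rewrite (resolve s hy).
apply: dec_sum => a; apply: dec_sum => b.
pose G' := G `&` [set t | t <> s].
have fG' : finite_set G' by apply: finite_setIl.
have aE : ampl G (eu p s a b) by apply: ampl_mono (ampl_eu _ _ _ _) _ => t ->.
have aE' : ampl G (eu p s b a) by apply: ampl_mono (ampl_eu _ _ _ _) _ => t ->.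
have aY : ampl G' (Yab s a b y).
  apply: ampl_scale; apply: ampl_Ex => //; exact: ampl_mul.
have hX' : G' `&` H `<=` [set t | t \in X].
  move=> t [[Gt ts] Ht]; have := hX t (conj Gt Ht); rewrite /= in_cons => /orP[/eqP //|//].
have d := IH G' _ fG' aY hX'.
have d2 : dec (ampl (G' `&` H)) (ampl (G `&` ~` H)) (Yab s a b y).
  apply: dec_mono d => // v av; apply: ampl_mono av _ => t [[Gt _] nH]; by split.
apply: (dec_mull fG aE _ _ _ d2).
- by move=> u au; apply: ampl_mono au _ => t [[Gt _] _].
- by move=> v av; apply: ampl_mono av _ => t [Gt _].
- move=> u au; apply: ampl_mul; first exact: finite_setIl.
    by apply: ampl_mono (ampl_eu _ _ _ _) _ => t ->.
  by apply: ampl_mono au _ => t [[Gt _] Ht]; split.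
Qed.

End Iter.
Section Dist.
Variable D : nat.
Local Notation site := (site D).

Lemma linf_distC (s t : site) : linf_dist s t = linf_dist t s.
Proof. by rewrite /linf_dist; apply: eq_bigr => i _; lia. Qed.

Lemma linf_dist_coord (s t : site) i : (`|s i - t i| <= linf_dist s t)%N.
Proof. exact: (@leq_bigmax _ (fun i => `|s i - t i|%N) i). Qed.

Lemma linf_dist_tri (s t u : site) : (linf_dist s u <= linf_dist s t + linf_dist t u)%N.
Proof.
apply/bigmax_leqP => i _.
have h1 := linf_dist_coord s t i.
have h2 := linf_dist_coord t u i.
lia.
Qed.

Lemma thicken_mono (F G : set site) l : F `<=` G -> thicken F l `<=` thicken G l.
Proof. by move=> FG t [s Fs h]; exists s => //; apply: FG. Qed.

Lemma thicken_self (F : set site) l : F `<=` thicken F l.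
Proof.
move=> t Ft; exists t => //; rewrite /linf_dist.
by apply/bigmax_leqP => i _; rewrite subrr.
Qed.

End Dist.

Section QCA.
Variable D : nat.
Variable p : site D -> nat.
Hypothesis p_pos : forall s, (0 < p s)%N.
Variable alpha : op D -> op D.
Variable l : nat.
Hypothesis Halpha : QCA_spread p alpha l.
Local Notation site := (site D).
Local Notation conf := (conf D).
Local Notation op := (op D).
Local Notation valid := (valid p).
Local Notation ampl := (ampliation p).
Local Notation Mat := (Mat p).

Lemma MatT G x : finite_set G -> ampl G x -> Mat setT x.
Proof. by move=> fG ax; exists G. Qed.

Lemma Mat_sub S S' x : S `<=` S' -> Mat S x -> Mat S' x.
Proof. by move=> SS [G [fG GS ax]]; exists G; split=> //; apply: subset_trans SS. Qed.

Lemma Supp_exists G x : finite_set G -> ampl G x -> exists F, is_Supp p x F.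
Proof.
move=> fG ax; have [X eX] := fin_seqP fG; subst G; clear fG.
move: {2}(size X) (leqnn (size X)) => n; elim: n X ax => [|n IH] X ax hn.
  exists [set t | t \in X]; split; [exact: finite_seq|by exists [set t | t \in X]; split=> //; exact: finite_seq|].
  by move=> G _ _ t; move: hn; case: X ax => // ax _.
have [all|] := pselect (forall G, finite_set G -> Mat G x -> [set t | t \in X] `<=` G).
  exists [set t | t \in X]; split=> //; [exact: finite_seq|by exists [set t | t \in X]; split=> //; exact: finite_seq].
move=> /existsNP [G /not_implyP [fG /not_implyP [[G1 [fG1 G1G aG1]] nsub]]].
have [t tX ntG] : exists2 t, t \in X & ~ G t.
  apply: contra_notP nsub => h u /= uX; apply: contra_notP h => nG; by exists u.
pose X' := [seq u <- X | `[< G1 u >]].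
have aX' : ampl [set u | u \in X'] x.
  apply: ampl_mono (ampl_inter ax aG1) _ => u [uX G1u].
  by rewrite /= mem_filter uX andbT; apply/asboolP.
apply: (IH X' aX'); rewrite -ltnS; apply: leq_trans hn.
rewrite size_filter -[X in (_ < X)%N](count_predC (fun u => `[< G1 u >]) X) -addn1 leq_add2l.
rewrite -has_count; apply/hasP; exists t => //=; apply/negP => /asboolP G1t.
by apply: ntG; apply: G1G.
Qed.

Lemma Supp_sub x F G : is_Supp p x F -> finite_set G -> ampl G x -> F `<=` G.
Proof. by move=> [_ _ h] fG aG; apply: h => //; exists G; split. Qed.

Lemma spread_ampl G x : finite_set G -> ampl G x ->
  exists2 G', finite_set G' /\ G' `<=` thicken G l & ampl G' (alpha x).
Proof.
move=> fG ax; have [[[hM _ _ _ _] _] hsp] := Halpha.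
have [F sF] := Supp_exists fG ax.
have [G0 [fG0 _ aG0]] := hM x (MatT fG ax).
have [F' sF'] := Supp_exists fG0 aG0.
have FG := Supp_sub sF fG ax.
have sp := hsp _ _ _ sF sF'.
have [_ [G' [fG' G'F' aG']] _] := sF'.
exists G' => //; split=> //; apply: subset_trans G'F' _; apply: subset_trans sp _.
exact: thicken_mono.
Qed.

Lemma alpha_inj x y : Mat setT x -> Mat setT y -> alpha x = alpha y -> x = y.
Proof. by have [_ [hi _]] := Halpha.1; apply: hi. Qed.

Lemma alpha_surj y : Mat setT y -> exists2 x, Mat setT x & alpha x = y.
Proof. by have [_ [_ hs]] := Halpha.1; apply: hs. Qed.

Lemma alpha_mul x y : Mat setT x -> Mat setT y -> alpha (opmul x y) = opmul (alpha x) (alpha y).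
Proof. by have [[_ _ _ h _] _] := Halpha.1; apply: h. Qed.

Lemma alpha_add x y : Mat setT x -> Mat setT y -> alpha (opadd x y) = opadd (alpha x) (alpha y).
Proof. by have [[_ h _ _ _] _] := Halpha.1; apply: h. Qed.

Lemma alpha_scale c x : Mat setT x -> alpha (opscale c x) = opscale c (alpha x).
Proof. by have [[_ _ h _ _] _] := Halpha.1; apply: h. Qed.

Lemma alpha_adj x : Mat setT x -> alpha (opadj x) = opadj (alpha x).
Proof. by have [[_ _ _ _ h] _] := Halpha.1; apply: h. Qed.

Lemma alpha_Mat x : Mat setT x -> Mat setT (alpha x).
Proof. by have [[h _ _ _ _] _] := Halpha.1; apply: h. Qed.

Lemma Mat_zero S : Mat S (@opzero D).
Proof. by exists set0; split=> //; exact: ampl_zero. Qed.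

Lemma Mat_one S : Mat S (opone p).
Proof. by exists set0; split=> //; exact: ampl_one. Qed.

Lemma Mat_add S x y : Mat S x -> Mat S y -> Mat S (opadd x y).
Proof.
move=> [G1 [f1 s1 a1]] [G2 [f2 s2 a2]]; exists (G1 `|` G2); split.
- by rewrite finite_setU.
- by move=> t [/s1|/s2].
- by apply: ampl_add; [apply: ampl_mono a1 _ => t; left|apply: ampl_mono a2 _ => t; right].
Qed.

Lemma Mat_mul S x y : Mat S x -> Mat S y -> Mat S (opmul x y).
Proof.
move=> [G1 [f1 s1 a1]] [G2 [f2 s2 a2]]; exists (G1 `|` G2); split.
- by rewrite finite_setU.
- by move=> t [/s1|/s2].
- apply: ampl_mul; first by rewrite finite_setU.
  + by apply: ampl_mono a1 _ => t; left.
  + by apply: ampl_mono a2 _ => t; right.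
Qed.

Lemma Mat_scale S c x : Mat S x -> Mat S (opscale c x).
Proof. by move=> [G [f s a]]; exists G; split=> //; apply: ampl_scale. Qed.

Lemma Mat_adj S x : Mat S x -> Mat S (opadj x).
Proof. by move=> [G [f s a]]; exists G; split=> //; apply: ampl_adj. Qed.

Lemma Mat_sum S (I : Type) (r : seq I) (f : I -> op) :
  (forall i, Mat S (f i)) -> Mat S (\big[@opadd D/@opzero D]_(i <- r) f i).
Proof.
move=> h; elim: r => [|a r IH]; first by rewrite big_nil; exact: Mat_zero.
by rewrite big_cons; apply: Mat_add.
Qed.

Lemma alpha_zero : alpha (@opzero D) = @opzero D.
Proof.
have e : @opzero D = opscale 0 (@opzero D).
  by apply/funext => a; apply/funext => b; rewrite /opscale mul0r.
rewrite {1}e alpha_scale; last exact: Mat_zero.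
by apply/funext => a; apply/funext => b; rewrite /opscale mul0r.
Qed.

Lemma alpha_sum (I : Type) (r : seq I) (f : I -> op) :
  (forall i, Mat setT (f i)) ->
  alpha (\big[@opadd D/@opzero D]_(i <- r) f i) = \big[@opadd D/@opzero D]_(i <- r) alpha (f i).
Proof.
move=> h; elim: r => [|a r IH]; first by rewrite !big_nil alpha_zero.
by rewrite !big_cons alpha_add ?IH //; apply: Mat_sum.
Qed.

Lemma alpha_one : alpha (opone p) = opone p.
Proof.
have [w Mw ew] := alpha_surj (Mat_one setT).
have [G' [fG' _ aG']] := alpha_Mat (Mat_one setT).
have [Gw [_ _ aGw]] := Mw.
rewrite -(opmul1 aG') -{2}ew -alpha_mul ?(op1mul aGw) //; exact: Mat_one.
Qed.

Lemma inv_spread G y w : finite_set G -> ampl G y -> Mat setT w -> alpha w = y ->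
  exists2 G', finite_set G' /\ G' `<=` thicken G l & ampl G' w.
Proof.
move=> fG ay Mw ew; have [G0 [fG0 _ aw]] := Mw.
have comm : forall s, ~ thicken G l s -> ampl [set t | t <> s] w.
  move=> s ns; apply: comm_site.
    by case: aw => w1 _ sg tau /w1 [].
  move=> a b ha hb.
  have ae := ampl_eu p s a b.
  have fS : finite_set [set s] := finite_set1 s.
  have [Ge [fGe GeT] aGe] := spread_ampl fS ae.
  have disj : forall t, Ge t -> G t -> False.
    move=> t /GeT [s' /= -> h] Gt; apply: ns; exists t => //.
    by rewrite linf_distC.
  have c := comm_disj aGe ay disj.
  have Me : Mat setT (eu p s a b) by apply: MatT fS ae.
  apply: alpha_inj; try by apply: Mat_mul.
  by rewrite !alpha_mul // ew c.
have [X eX] := fin_seqP fG0; subst G0.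
have key : forall X' : seq site, ampl ([set t | t \in X] `&`
    [set t | forall s, s \in X' -> ~ thicken G l s -> t <> s]) w.
  elim=> [|s X' IH].
    by apply: ampl_mono aw _ => t Xt; split.
  have [Ts|nTs] := pselect (thicken G l s).
    apply: ampl_mono IH _ => t [Xt h]; split=> // u; rewrite in_cons => /orP[/eqP ->//|uX'].
    exact: h.
  apply: ampl_mono (ampl_inter IH (comm s nTs)) _ => t [[Xt h] ts]; split=> // u.
  by rewrite in_cons => /orP[/eqP ->//|uX']; apply: h.
exists ([set t | t \in X] `&` [set t | forall s, s \in X -> ~ thicken G l s -> t <> s]).
  split; first exact: finite_setIl (finite_seq X).
  move=> t [Xt h]; have [//|nT] := pselect (thicken G l t); by exfalso; apply: (h t Xt nT).
exact: key.
Qed.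

Lemma Ex_img (Hs : set site) s z :
  (forall a b, exists2 w, Mat Hs w & alpha w = eu p s a b) ->
  (exists2 w, Mat Hs w & alpha w = z) ->
  exists2 w, Mat Hs w & alpha w = Ex p s z.
Proof.
move=> he [w Mw ew].
have hex : forall ab : nat * nat, exists w', Mat Hs w' /\ alpha w' = eu p s ab.1 ab.2.
  by move=> [a b]; have [w' ? ?] := he a b; exists w'.
have [f hf] := choice hex.
have MT : forall u, Mat Hs u -> Mat setT u by move=> u; apply: Mat_sub.
pose t a b := opscale ((p s)%:R^-1) (opmul (f (a, b)) (opmul w (f (b, a)))).
have Mt' : forall a b, Mat Hs (opmul (f (a, b)) (opmul w (f (b, a)))).
  move=> a b; apply: Mat_mul; first by case: (hf (a, b)).
  by apply: Mat_mul => //; case: (hf (b, a)).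
have Mt : forall a b, Mat Hs (t a b) by move=> a b; apply: Mat_scale; apply: Mt'.
exists (\big[@opadd D/@opzero D]_(a < p s) \big[@opadd D/@opzero D]_(b < p s) t a b).
  by apply: Mat_sum => a; apply: Mat_sum => b; apply: Mt.
rewrite alpha_sum; last by move=> a; apply: MT; apply: Mat_sum => b; apply: Mt.
rewrite /Ex; apply: eq_bigr => a _.
rewrite alpha_sum; last by move=> b; apply: MT; apply: Mt.
apply: eq_bigr => b _; rewrite /t alpha_scale; last by apply: MT; apply: Mt'.
have M1 : forall x, Mat setT (f x) by move=> x; apply: MT; case: (hf x).
have Mw' : Mat setT w by apply: MT.
rewrite alpha_mul; [|exact: M1|exact: Mat_mul].
rewrite alpha_mul; [|exact: Mw'|exact: M1].
by rewrite (proj2 (hf _)) (proj2 (hf _)) ew.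
Qed.

Lemma Exs_img (Hs : set site) L z :
  (forall s a b, s \in L -> exists2 w, Mat Hs w & alpha w = eu p s a b) ->
  (exists2 w, Mat Hs w & alpha w = z) ->
  exists2 w, Mat Hs w & alpha w = Exs p L z.
Proof.
move=> he hz; elim: L he => [//|s L IH] he /=.
apply: Ex_img; first by move=> a b; apply: he; rewrite in_cons eqxx.
by apply: IH => s' a b sL; apply: he; rewrite in_cons sL orbT.
Qed.

Lemma eu_img (Hs : set site) s a b : thicken [set s] l `<=` Hs ->
  exists2 w, Mat Hs w & alpha w = eu p s a b.
Proof.
move=> hT; have ae := ampl_eu p s a b; have fS := finite_set1 s.
have [w Mw ew] := alpha_surj (MatT fS ae).
have [G' [fG' G'T] aG'] := inv_spread fS ae Mw ew.
exists w => //; exists G'; split=> //; exact: subset_trans hT.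
Qed.

End QCA.
Section ListHelp.
Variable D : nat.
Local Notation op := (op D).

Lemma eq_big_In (T : Type) (r : seq T) (F G : T -> op) :
  (forall i, List.In i r -> F i = G i) ->
  \big[@opadd D/@opzero D]_(i <- r) F i = \big[@opadd D/@opzero D]_(i <- r) G i.
Proof.
elim: r => [|a r IH] h; first by rewrite !big_nil.
rewrite !big_cons h /=; last by left.
by rewrite IH // => i hi; apply: h; right.
Qed.

Lemma In_nth (T : Type) (x0 : T) (r : seq T) i : (i < size r)%N -> List.In (nth x0 r i) r.
Proof.
elim: r i => [|a r IH] [|i] //= h; first by left.
by right; apply: IH.
Qed.

End ListHelp.

Lemma Mat_sum_In D (p : site D -> nat) S (T : Type) (r : seq T) (f : T -> op D) :
  (forall i, List.In i r -> Mat p S (f i)) -> Mat p S (\big[@opadd D/@opzero D]_(i <- r) f i).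
Proof.
elim: r => [|a r IH] h; first by rewrite big_nil; apply: Mat_zero.
rewrite big_cons; apply: Mat_add; first by apply: h; left.
by apply: IH => i hi; apply: h; right.
Qed.

Lemma alpha_sum_In D (p : site D -> nat) (alpha : op D -> op D) l (Ha : QCA_spread p alpha l)
  (T : Type) (r : seq T) (f : T -> op D) :
  (forall i, List.In i r -> Mat p setT (f i)) ->
  alpha (\big[@opadd D/@opzero D]_(i <- r) f i) = \big[@opadd D/@opzero D]_(i <- r) alpha (f i).
Proof.
elim: r => [|a r IH] h; first by rewrite !big_nil (alpha_zero Ha).
have Ma : Mat p setT (f a) by apply: h; left.
have Mr : Mat p setT (\big[@opadd D/@opzero D]_(i <- r) f i).
  by apply: Mat_sum_In => i hi; apply: h; right.
rewrite !big_cons (alpha_add Ha) // IH // => i hi; apply: h; by right.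
Qed.

Section Geo.
Variable d : nat.
Local Notation site := (site d.+1).

Lemma proj_dist (s t : site) : (linf_dist (proj s) (proj t) <= linf_dist s t)%N.
Proof.
apply/bigmax_leqP => i _; rewrite /proj !ffunE; exact: linf_dist_coord.
Qed.

End Geo.
Section Main.
Variable d : nat.
Variable p : site d.+1 -> nat.
Hypothesis p_pos : forall s, (0 < p s)%N.
Variable alpha : op d.+1 -> op d.+1.
Variable l : nat.
Variable n : int.
Hypothesis Ha : QCA_spread p alpha l.
Local Notation site := (site d.+1).
Local Notation op := (op d.+1).
Local Notation ampl := (ampliation p).
Local Notation Mat := (Mat p).

Lemma AmbE : coarseMat p n l setT = Mat (Sstrip n l).
Proof.
rewrite /coarseMat; congr Mat; apply/seteqP; split=> s /=; [by case|by split].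
Qed.

Lemma B_subalg : unital_star_subalg p (coarseMat p n l setT) (boundary_alg p alpha n l).
Proof.
have MT : forall S x, Mat S x -> Mat setT x by move=> S x; apply: Mat_sub.
rewrite AmbE; split; first split.
- by move=> x [].
- split; last exact: Mat_one.
  by exists (opone p); [exact: Mat_one|rewrite (alpha_one Ha)].
- move=> x y [[x' Mx' ->] Mx] [[y' My' ->] My]; split; last exact: Mat_add.
  have := MT _ _ Mx'; have := MT _ _ My' => ? ?.
  by exists (opadd x' y'); [exact: Mat_add|rewrite (alpha_add Ha)].
- move=> c x [[x' Mx' ->] Mx]; split; last exact: Mat_scale.
  have := MT _ _ Mx' => ?.
  by exists (opscale c x'); [exact: Mat_scale|rewrite (alpha_scale Ha)].
- move=> x y [[x' Mx' ->] Mx] [[y' My' ->] My]; split; last exact: Mat_mul.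
  have := MT _ _ Mx'; have := MT _ _ My' => ? ?.
  by exists (opmul x' y'); [exact: Mat_mul|rewrite (alpha_mul Ha)].
- move=> x [[x' Mx' ->] Mx]; split; last exact: Mat_adj.
  have := MT _ _ Mx' => ?.
  by exists (opadj x'); [exact: Mat_adj|rewrite (alpha_adj Ha)].
Qed.

Lemma coarse_bound z T Y Yz : is_coarseSupp p n l z Yz -> ampl T z ->
  (forall t, T t -> Y (proj t)) -> Yz `<=` Y.
Proof.
move=> [fY [Gz [fGz GzS aGz]] hmin] aT hT.
have : Yz `<=` Yz `&` Y.
  apply: hmin; first exact: finite_setIl.
  exists (Gz `&` T); split; first exact: finite_setIl.
    move=> t [Gt Tt]; have [St Yt] := GzS t Gt; split=> //; split=> //; exact: hT.
  exact: ampl_inter.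
by move=> h t /h [].
Qed.


Lemma foldr_fin (T U : Type) (r : seq T) (f : T -> set U) :
  (forall i, List.In i r -> finite_set (f i)) -> finite_set (foldr (fun i acc => f i `|` acc) set0 r).
Proof.
elim: r => [|a r IH] h //=; rewrite finite_setU; split; first by apply: h; left.
by apply: IH => i hi; apply: h; right.
Qed.

Lemma foldr_sub (T U : Type) (r : seq T) (f : T -> set U) i :
  List.In i r -> f i `<=` foldr (fun i acc => f i `|` acc) set0 r.
Proof.
elim: r => [|a r IH] //= [<-|hi] t ft; [by left|right; exact: IH].
Qed.

Lemma main_decomp x : coarseMat p n l setT x ->
  exists (k : nat) (a b : 'I_k -> op),
      x = \big[@opadd _/@opzero _]_(i < k) opmul (a i) (b i) /\
      forall i, [/\ boundary_alg p alpha n l (a i),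
                  commutant_in (coarseMat p n l setT) (boundary_alg p alpha n l) (b i) &
        forall Yx Ya Yb, is_coarseSupp p n l x Yx ->
          is_coarseSupp p n l (a i) Ya -> is_coarseSupp p n l (b i) Yb ->
          Ya `<=` thicken Yx (2 * l)%N /\ Yb `<=` thicken Yx (2 * l)%N].
Proof.
rewrite AmbE => Ax.
have [G0 [fG0 G0S aG0]] := Ax.
have [Fx sFx] := Supp_exists fG0 aG0.
have FxG0 := Supp_sub sFx fG0 aG0.
have [_ [Gx [fGx GxF aGx]] _] := sFx.
have GxS : Gx `<=` Sstrip n l by move=> t /GxF /FxG0 /G0S.
have [w Mw ew] := alpha_surj Ha (MatT fGx aGx).
have [Gy [fGy GyT] aGy] := inv_spread Ha fGx aGx Mw ew.
have [Xy eXy] := fin_seqP fGy.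
have hX : Gy `&` Hhalf n `<=` [set t | t \in Xy] by rewrite eXy => t [].
have dw := decomp p_pos fGy aGy hX.
have [lw [ew2 hlw]] := dec_list dw.
have hU : forall pr : op * op, exists Gu : set site, List.In pr lw ->
   [/\ finite_set Gu, Gu `<=` thicken (Gy `&` Hhalf n) l & ampl Gu (alpha pr.1)].
  move=> pr; have [h|h] := pselect (List.In pr lw); last by exists set0.
  have [a1 _] := hlw pr h.
  have [Gu [fGu GuT] aGu] := spread_ampl Ha (finite_setIl _ fGy) a1.
  by exists Gu.
have [fu hfu] := choice hU.
have hV : forall pr : op * op, exists Gv : set site, List.In pr lw ->
   [/\ finite_set Gv, Gv `<=` thicken (Gy `&` ~` Hhalf n) l & ampl Gv (alpha pr.2)].
  move=> pr; have [h|h] := pselect (List.In pr lw); last by exists set0.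
  have [_ a2] := hlw pr h.
  have [Gv [fGv GvT] aGv] := spread_ampl Ha (finite_setIl _ fGy) a2.
  by exists Gv.
have [fv hfv] := choice hV.
pose K := foldr (fun pr acc => (fu pr `|` fv pr) `|` acc) set0 lw.
have fK : finite_set K.
  apply: foldr_fin => pr hin; rewrite finite_setU.
  by have [? _ _] := hfu pr hin; have [? _ _] := hfv pr hin.
have [XK eXK] := fin_seqP fK.
pose L := [seq t : site <- XK | t ord0 <= n - l%:Z].
pose R := [seq t : site <- XK | n + l%:Z < t ord0].
pose a (pr : op * op) := Exs p L (alpha pr.1).
pose b (pr : op * op) := Exs p R (alpha pr.2).
have uK : forall pr t, List.In pr lw -> fu pr t -> t \in XK.
  move=> pr t hin ft; have : K t by apply: (foldr_sub (f := fun pr => fu pr `|` fv pr) hin); left.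
  by rewrite eXK.
have vK : forall pr t, List.In pr lw -> fv pr t -> t \in XK.
  move=> pr t hin ft; have : K t by apply: (foldr_sub (f := fun pr => fu pr `|` fv pr) hin); right.
  by rewrite eXK.
have uH : forall pr t, List.In pr lw -> fu pr t -> t ord0 <= n + l%:Z.
  move=> pr t hin ft; have [_ T _] := hfu pr hin; have [s [_ Hs] h] := T t ft.
  have := linf_dist_coord s t ord0; move: Hs; rewrite /Hhalf /= => Hs; lia.
have vH : forall pr t, List.In pr lw -> fv pr t -> n - l%:Z + 1 <= t ord0.
  move=> pr t hin ft; have [_ T _] := hfv pr hin; have [s [_ Hs] h] := T t ft.
  have := linf_dist_coord s t ord0; move: Hs; rewrite /Hhalf /= => /negP Hs; lia.
have aA : forall pr, List.In pr lw -> ampl (fu pr `&` [set t | t \notin L]) (a pr).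
  by move=> pr hin; have [f1 _ a1] := hfu pr hin; apply: ampl_Exs.
have aB : forall pr, List.In pr lw -> ampl (fv pr `&` [set t | t \notin R]) (b pr).
  by move=> pr hin; have [f1 _ a1] := hfv pr hin; apply: ampl_Exs.
have SA : forall pr, List.In pr lw -> fu pr `&` [set t | t \notin L] `<=` Sstrip n l.
  move=> pr hin t [ft /= ntL]; have := uH _ _ hin ft; have := uK _ _ hin ft => tK.
  rewrite /L mem_filter tK andbT in ntL; rewrite /Sstrip /=; move: ntL => /negP ntL h.
  apply/andP; split; lia.
have SB : forall pr, List.In pr lw -> fv pr `&` [set t | t \notin R] `<=` Sstrip n l.
  move=> pr hin t [ft /= ntR]; have := vH _ _ hin ft; have := vK _ _ hin ft => tK.
  rewrite /R mem_filter tK andbT in ntR; rewrite /Sstrip /=; move: ntR => /negP ntR h.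
  apply/andP; split; lia.
have eqx : x = \big[@opadd _/@opzero _]_(pr <- lw) opmul (a pr) (b pr).
  have ex1 : x = Exs p L (Exs p R x).
    rewrite (Exs_id p_pos (L := R) aGx); last first.
      move=> t; rewrite /R mem_filter => /andP[h _] /GxS; rewrite /Sstrip /= => /andP[_ h2].
      lia.
    rewrite (Exs_id p_pos (L := L) aGx) //.
    move=> t; rewrite /L mem_filter => /andP[h _] /GxS; rewrite /Sstrip /= => /andP[h2 _].
    lia.
  rewrite {1}ex1 -ew ew2 (alpha_sum_In Ha); last first.
    move=> pr hin; have [a1 a2] := hlw pr hin; apply: Mat_mul.
      exact: MatT (finite_setIl _ fGy) a1.
    exact: MatT (finite_setIl _ fGy) a2.
  rewrite (eq_big_In (G := fun pr => opmul (alpha pr.1) (alpha pr.2))); last first.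
    move=> pr hin; have [a1 a2] := hlw pr hin; apply: (alpha_mul Ha).
      exact: MatT (finite_setIl _ fGy) a1.
    exact: MatT (finite_setIl _ fGy) a2.
  rewrite Exs_sum (eq_big_In (G := fun pr => opmul (alpha pr.1) (b pr))); last first.
    move=> pr hin; have [fU _ aU] := hfu pr hin; have [fV _ aV] := hfv pr hin.
    apply: (Exs_mull fV fU aV aU) => t; rewrite /R mem_filter => /andP[h _] ft.
    have := uH _ _ hin ft; lia.
  rewrite Exs_sum; apply: eq_big_In => pr hin.
  have [fU _ aU] := hfu pr hin; have [fV _ aV] := hfv pr hin.
  apply: (Exs_mulr fU (finite_setIl _ fV) aU (aB pr hin)).
  move=> t; rewrite /L mem_filter => /andP[h _] [ft _].
  have := vH _ _ hin ft; lia.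
pose x0 := (@opzero d.+1, @opzero d.+1).
exists (size lw), (fun i => a (nth x0 lw i)), (fun i => b (nth x0 lw i)); split.
  by rewrite eqx (big_nth x0) big_mkord.
move=> i; have hin := In_nth x0 (ltn_ord i).
set pr := nth x0 lw i.
have [a1 a2] := hlw pr hin.
have [fU TU aU] := hfu pr hin; have [fV TV aV] := hfv pr hin.
split.
- split.
    have heL : forall s a0 b0, s \in L -> exists2 w, Mat (Hhalf n) w & alpha w = eu p s a0 b0.
      move=> s a0 b0 sL; apply: (eu_img Ha a0 b0) => t [s' /= -> h].
      rewrite /L mem_filter in sL; case/andP: sL => sL _.
      have := linf_dist_coord s t ord0; rewrite /Hhalf /=; lia.
    have hzA : exists2 w, Mat (Hhalf n) w & alpha w = alpha pr.1.
      by exists pr.1 => //; exists (Gy `&` Hhalf n); split; [exact: finite_setIl|by move=> t []|by []].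
    have [y My ey] := Exs_img Ha heL hzA.
    by exists y.
  by exists (fu pr `&` [set t | t \notin L]); split; [exact: finite_setIl|exact: SA|exact: aA].
- split.
    exists (fv pr `&` [set t | t \notin R]); split.
    + exact: finite_setIl.
    + exact: SB.
    + exact: aB.
  move=> a' [[y' My' ->] _].
  have heR : forall s a0 b0, s \in R -> exists2 w, Mat (~` Hhalf n) w & alpha w = eu p s a0 b0.
    move=> s a0 b0 sR; apply: (eu_img Ha a0 b0) => t [s' /= -> h].
    rewrite /R mem_filter in sR; case/andP: sR => sR _.
    have := linf_dist_coord s t ord0; rewrite /Hhalf /= => h2 /negP; apply; lia.
  have hzB : exists2 w, Mat (~` Hhalf n) w & alpha w = alpha pr.2.
    by exists pr.2 => //; exists (Gy `&` ~` Hhalf n); split; [exact: finite_setIl|by move=> t []|by []].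
  have [v' Mv' ev'] := Exs_img Ha heR hzB.
  rewrite /b -ev'.
  have [G1 [fG1 G1H aG1]] := My'; have [G2 [fG2 G2H aG2]] := Mv'.
  have My'T := MatT fG1 aG1; have Mv'T := MatT fG2 aG2.
  rewrite -!(alpha_mul Ha) //.
  congr alpha; apply: (comm_disj aG1 aG2) => t /G1H h1 /G2H h2; exact: h2.
- move=> Yx Ya Yb cX cA cB.
  have GxY : forall t, Gx t -> Yx (proj t).
    have [_ [G1 [fG1 G1S aG1]] _] := cX.
    have F1 := Supp_sub sFx fG1 aG1.
    by move=> t /GxF /F1 /G1S [].
  have near : forall t s, Gy s -> (linf_dist s t <= l)%N -> thicken Yx (2 * l)%N (proj t).
    move=> t s Gys h1; have [r Gxr h2] := GyT s Gys.
    exists (proj r); first exact: GxY.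
    have := proj_dist r t; have := linf_dist_tri r s t; lia.
  split.
    apply: (coarse_bound cA (aA pr hin)) => t [ft _].
    by have [s [Gys _] h] := TU t ft; apply: near Gys h.
  apply: (coarse_bound cB (aB pr hin)) => t [ft _].
  by have [s [Gys _] h] := TV t ft; apply: near Gys h.
Qed.

End Main.

Theorem lemma3p6 (d : nat) (p : site d.+1 -> nat)
  (alpha : op d.+1 -> op d.+1) (l : nat) (n : int) :
  (forall s, (0 < p s)%N) ->
  QCA_spread p alpha l -> (1 < l)%N ->
  invertible_subalg p n l (boundary_alg p alpha n l) (2 * l)%N.
Proof.
move=> pp Ha _; split; first exact: B_subalg.
exact: main_decomp.
Qed.
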